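(* Consider a two-player perfect-information game of depth $D$, together with approximate bounds $V^{\mathrm{grim}},V^{\mathrm{alt}}$ satisfying $V^{\mathrm{alt}}(s)\ge V^{\mathrm{grim}}(s)$ for all $s$, and approximate learned EPFs $\{\tilde U_s\}$ with induced strategy $\tilde\pi$, all as in the context. Suppose $L_\infty(\tilde U_s,\tilde U^{\mathrm{target}}_s)\le\epsilon$ for all $s\in\mathcal S$. Then $|R_1(\tilde\pi)-\widetilde{\mathsf{OPT}}_2|=\mathcal O(D\epsilon)$, where $\widetilde{\mathsf{OPT}}_2=\max_{\mu_2}\tilde U_{\mathrm{root}}(\mu_2)$. That is, the difference is at most $CD\epsilon$ for an absolute constant $C$.
   Context: A two-player perfect-information game is a finite rooted tree with states $\mathcal S$. Its leaves $\mathcal L$ carry payoffs $r_1(\ell),r_2(\ell)$ for the leader $\mathsf P_1$ and the follower $\mathsf P_2$. Non-leaf states are partitioned into leader states $\mathcal S_1$ and follower states $\mathcal S_2$, and $\mathcal C(s)$ denotes the children of $s$. The depth $D$ is the maximum number of edges on a root-to-leaf path. Approximate bounds: - Let $\tilde\pi_1^{\mathrm{grim}}$ be any fixed leader strategy (an approximate grim strategy). Let $V^{\mathrm{grim}}(s)$ be the follower's expected payoff from $s$ when the follower best responds to $\tilde\pi_1^{\mathrm{grim}}$ in the subgame rooted at $s$. - Let $\tilde\pi^{\mathrm{alt}}$ be any fixed joint strategy (an approximate joint altruistic strategy), and let $V^{\mathrm{alt}}(s)$ be the follower's expected payoff from $s$ under it. For leaves, both quantities equal $r_2(\ell)$. -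 For $s\in\mathcal S_2$ and $s'\in\mathcal C(s)$, let $\tilde\tau(s')=\max_{s^!\in\mathcal C(s),s^!\ne s'}V^{\mathrm{grim}}(s^!)$. Let $\tilde\beta(s')=\tilde\tau(s')$ if the parent of $s'$ is in $\mathcal S_2$, and $-\infty$ if it is in $\mathcal S_1$. Operators, for $g:\mathbb R\to\mathbb R\cup\{-\infty\}$: - $\bigwedge_i g_i$ is the upper concave envelope, the pointwise infimum of all concave $h\ge\max_i g_i$; - $[g\triangleright t](\mu)=g(\mu)$ if $\mu\ge t$ and $-\infty$ otherwise. Learned EPFs: for a leaf, $\tilde U_\ell(\mu)=r_1(\ell)$ if $\mu=r_2(\ell)$ and $-\infty$ otherwise. For each non-leaf $s$, $\tilde U_s$ is piecewise linear, the linear interpolation of finitely many points with $x$-coordinates in $[V^{\mathrm{grim}}(s),V^{\mathrm{alt}}(s)]$ including both endpoints. It is real-valued there and $-\infty$ outside. The target is $\tilde U^{\mathrm{target}}_s=\bigwedge_{s'\in\mathcal C(s)}(\tilde U_{s'}\triangleright\tilde\beta(s'))$ for non-leaf $s$, and $\tilde U_\ell$ for leaves. The loss is $L_\infty(f,g)=\sup_\mu|f(\mu)-g(\mu)|$, with $|(-\infty)-(-\infty)|=0$. Induced strategy $\tilde\pi$: start at the root with promise $\mu_{\mathrm{root}}\in\arg\max\tilde U_{\mathrm{root}}$. At a non-leaf $s$ with promise $\mu$, pick a maximizer $(s',s'',t,\mu',\mu'')$, over $s',s''\in\mathcal C(s)$, $t\in[0,1]$ with $t\mu'+(1-t)\mu''=\mu$,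 of $t[\tilde U_{s'}\triangleright\tilde\beta(s')](\mu')+(1-t)[\tilde U_{s''}\triangleright\tilde\beta(s'')](\mu'')$. Move to $s'$ with probability $t$ and promise $\mu'$, and to $s''$ with probability $1-t$ and promise $\mu''$. The follower follows recommendations at its states. $R_1(\tilde\pi)$ is the leader's resulting expected payoff. *)

(* Defs.v *)
From HB Require Import structures.
From mathcomp Require Import all_boot all_order all_algebra.
From mathcomp Require Import boolp classical_sets reals ereal.
Unset Printing Implicit Defensive.
Import Order.TTheory GRing.Theory Num.Theory.
Local Open Scope ring_scope.
Local Open Scope classical_set_scope.

(* Finite rooted game trees.  A leaf carries (r1, r2).  A non-leaf node     *)
(* carries its owner ([leader = true] : state in S_1, leader P_1;           *)
(* [leader = false] : state in S_2, follower P_2) and its n.+1 children,    *)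
(* indexed by 'I_n.+1.  A state is identified by its path from the root    *)
(* (the sequence of child indices), so distinct states are distinct paths. *)
Inductive game (R : Type) : Type :=
| Leaf of R & R
| Node (leader : bool) (n : nat) of ('I_n.+1 -> game R).
Arguments Leaf {R}.
Arguments Node {R}.

Fixpoint sub {R : Type} (g : game R) (p : seq nat) : option (game R) :=
  match p with
  | [::] => Some g
  | i :: p' =>
    match g with
    | Leaf _ _ => None
    | Node _ n ch => if (i < n.+1)%N then sub (ch (inord i)) p' else None
    end
  end.

Fixpoint depth {R : Type} (g : game R) : nat :=
  match g with
  | Leaf _ _ => 0
  | Node _ n ch => (\max_(i < n.+1) depth (ch i)).+1
  end.

Section Defs.
Variable R : realType.
Local Open Scope ereal_scope.

(* V^grim(s): follower's payoff when best responding to the fixed (mixed,  *)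
(* behavioural) leader strategy [pi1 : path -> child index -> probability]. *)
Fixpoint vgrim (pi1 : seq nat -> nat -> R) (g : game R) (p : seq nat) : R :=
  match g with
  | Leaf _ r2 => r2
  | Node leader n ch =>
    if leader then (\sum_(i < n.+1) pi1 p i * vgrim pi1 (ch i) (rcons p i))%R
    else \big[Num.max/vgrim pi1 (ch ord0) (rcons p 0%N)]_(i < n.+1)
            vgrim pi1 (ch i) (rcons p i)
  end.

(* V^alt(s): follower's expected payoff under the fixed joint strategy. *)
Fixpoint valt (pia : seq nat -> nat -> R) (g : game R) (p : seq nat) : R :=
  match g with
  | Leaf _ r2 => r2
  | Node _ n ch => (\sum_(i < n.+1) pia p i * valt pia (ch i) (rcons p i))%R
  end.

Definition is_strategy (only_leader : bool) (pi : seq nat -> nat -> R)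
  (g : game R) : Prop :=
  forall p l n ch, sub g p = Some (Node l n ch) -> (only_leader ==> l) ->
    (forall i : 'I_n.+1, (0 <= pi p i)%R) /\ (\sum_(i < n.+1) pi p i)%R = 1%R.

Definition leaf_epf (r1 r2 : R) : R -> \bar R :=
  fun mu => if mu == r2 then r1%:E else -oo.

Definition epf (U : seq nat -> R -> \bar R) (g : game R) (p : seq nat)
  : R -> \bar R :=
  match g with
  | Leaf r1 r2 => leaf_epf r1 r2
  | Node _ _ _ => U p
  end.

Definition pl_interp (f : R -> \bar R) (a b : R) : Prop :=
  exists (m : nat) (x y : nat -> R),
    [/\ x 0%N = a, x m = b,
        (forall i, (i < m)%N -> (x i < x i.+1)%R),
        f a = (y 0%N)%:E &
      [/\
        (forall i mu, (i < m)%N -> (x i <= mu <= x i.+1)%R ->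
           f mu = (y i + (mu - x i) * (y i.+1 - y i) / (x i.+1 - x i))%:E)
      & (forall mu, ~ (a <= mu <= b)%R -> f mu = -oo)]].

(* Concavity of an extended-real valued function: convex hypograph. *)
Definition concave_e (h : R -> \bar R) : Prop :=
  forall (x y a b t : R), (0 <= t <= 1)%R ->
    a%:E <= h x -> b%:E <= h y ->
    (t * a + (1 - t) * b)%:E <= h (t * x + (1 - t) * y)%R.

Definition envelope (n : nat) (G : 'I_n.+1 -> R -> \bar R) : R -> \bar R :=
  fun mu => ereal_inf [set h mu | h in
    [set h : R -> \bar R | concave_e h /\
       forall x, \big[Order.max/-oo]_(i < n.+1) G i x <= h x]].

Definition restrict (f : R -> \bar R) (t : \bar R) : R -> \bar R :=
  fun mu => if t <= mu%:E then f mu else -oo.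

(* L_infty distance, with |(-oo) - (-oo)| = 0. *)
Definition Linf (f g : R -> \bar R) : \bar R :=
  ereal_sup [set (if (f mu == -oo) && (g mu == -oo) then 0 else `|f mu - g mu|)
            | mu in [set: R]].

Definition beta (pi1 : seq nat -> nat -> R) (leader : bool) (n : nat)
  (ch : 'I_n.+1 -> game R) (p : seq nat) (i : 'I_n.+1) : \bar R :=
  if leader then -oo
  else \big[Order.max/-oo]_(j < n.+1 | j != i) (vgrim pi1 (ch j) (rcons p j))%:E.

Definition child_fun (U : seq nat -> R -> \bar R) (pi1 : seq nat -> nat -> R)
  (leader : bool) (n : nat) (ch : 'I_n.+1 -> game R) (p : seq nat)
  (i : 'I_n.+1) : R -> \bar R :=
  restrict (epf U (ch i) (rcons p i)) (beta pi1 leader n ch p i).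

Definition target (U : seq nat -> R -> \bar R) (pi1 : seq nat -> nat -> R)
  (g : game R) (p : seq nat) : R -> \bar R :=
  match g with
  | Leaf r1 r2 => leaf_epf r1 r2
  | Node l n ch => envelope n (child_fun U pi1 l n ch p)
  end.

Definition objective (U : seq nat -> R -> \bar R) (pi1 : seq nat -> nat -> R)
  (l : bool) (n : nat) (ch : 'I_n.+1 -> game R) (p : seq nat)
  (i j : 'I_n.+1) (t mu1 mu2 : R) : \bar R :=
  t%:E * child_fun U pi1 l n ch p i mu1
  + (1 - t)%:E * child_fun U pi1 l n ch p j mu2.

Definition feasible (n : nat) (mu : R) (c : nat * nat * R * R * R) : Prop :=
  let '(i, j, t, mu1, mu2) := c in
  [/\ (i < n.+1)%N, (j < n.+1)%N, (0 <= t <= 1)%R & (t * mu1 + (1 - t) * mu2 = mu)%R].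

Definition maximizer_choice (U : seq nat -> R -> \bar R)
  (pi1 : seq nat -> nat -> R) (g : game R)
  (c : seq nat -> R -> nat * nat * R * R * R) : Prop :=
  forall p l n ch mu, sub g p = Some (Node l n ch) ->
    feasible n mu (c p mu) /\
    let '(i, j, t, mu1, mu2) := c p mu in
    forall (i' j' : 'I_n.+1) (t' mu1' mu2' : R),
      (0 <= t' <= 1)%R -> (t' * mu1' + (1 - t') * mu2' = mu)%R ->
      objective U pi1 l n ch p i' j' t' mu1' mu2'
        <= objective U pi1 l n ch p (inord i) (inord j) t mu1 mu2.

(* Leader's expected payoff of the induced strategy from state g at path p *)
(* with promise mu (the follower follows recommendations).                 *)
Fixpoint induced_value (c : seq nat -> R -> nat * nat * R * R * R)
  (g : game R) (p : seq nat) (mu : R) : R :=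
  match g with
  | Leaf r1 _ => r1
  | Node _ n ch =>
    let '(i, j, t, mu1, mu2) := c p mu in
    (t * induced_value c (ch (inord i)) (rcons p i) mu1
     + (1 - t) * induced_value c (ch (inord j)) (rcons p j) mu2)%R
  end.

End Defs.

(* Main.v *)
Require Import Defs.
From mathcomp Require Import all_boot all_order all_algebra.
From mathcomp Require Import boolp classical_sets reals ereal.
From mathcomp Require Import ring lra.
Import Order.TTheory GRing.Theory Num.Theory.
Local Open Scope ring_scope.
Local Open Scope classical_set_scope.
Section Env.
Variable R : realType.
Local Open Scope ereal_scope.

Lemma pmulNy (t : R) : (0 < t)%R -> t%:E * -oo = -oo.
Proof. by move=> t0; rewrite mulrNy gtr0_sg // mul1e. Qed.

Lemma ext_cases (x : \bar R) : x != +oo -> x = -oo \/ exists r, x = r%:E.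
Proof. by case: x => [r| |] // _; [right; exists r | left]. Qed.

Lemma obj_le_env (n : nat) (G : 'I_n.+1 -> R -> \bar R) (mu t x y : R)
  (i j : 'I_n.+1) :
  (forall i z, G i z != +oo) -> (0 <= t <= 1)%R -> (t * x + (1 - t) * y = mu)%R ->
  t%:E * G i x + (1 - t)%:E * G j y <= envelope R n G mu.
Proof.
move=> Gf /andP[t0 t1] hmu.
apply: le_ereal_inf_tmp => _ [h [hc hG] <-].
have Gh : forall k z, G k z <= h z.
  move=> k z; apply: le_trans (hG z); exact: le_bigmax.
have [te|tn0] := eqVneq t 0%R.
  rewrite te in hmu *; rewrite mul0e add0e subr0 mul1e; move: hmu; rewrite mul0r add0r subr0 mul1r => <-.
  exact: Gh.
have [te|tn1] := eqVneq t 1%R.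
  rewrite te in hmu *; rewrite mul1e subrr mul0e adde0; move: hmu; rewrite mul1r subrr mul0r addr0 => <-.
  exact: Gh.
have tp : (0 < t)%R by rewrite lt0r tn0.
have tp' : (0 < 1 - t)%R by rewrite subr_gt0 lt_neqAle tn1.
case: (ext_cases _ (Gf i x)) => [->|[a ea]].
  by rewrite (pmulNy _ tp) addNye leNye.
rewrite ea.
case: (ext_cases _ (Gf j y)) => [->|[b eb]].
  by rewrite (pmulNy _ tp') addeNy leNye.
rewrite eb.
rewrite -!EFinM -EFinD -hmu; apply: hc.
- by rewrite t0 t1.
- by rewrite -ea; exact: Gh.
- by rewrite -eb; exact: Gh.
Qed.

Lemma hcase (L Rr : Prop) (mu : R) (M : \bar R) (x a : R) :
  let h := fun z : R => if (z < mu)%R then (if `[< L >] then +oo else -oo)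
             else if z == mu then M else (if `[< Rr >] then +oo else -oo) in
  a%:E <= h x ->
  ((x < mu)%R /\ L) \/ (x = mu /\ a%:E <= M) \/ ((mu < x)%R /\ Rr).
Proof.
move=> h; rewrite /h; case: (ltgtP x mu) => hx.
- case: asboolP => hL ha; first by left.
  by move: ha; rewrite leeNy_eq.
- case: asboolP => hL ha; first by right; right.
  by move: ha; rewrite leeNy_eq.
- by move=> ha; right; left.
Qed.

Lemma env_le (n : nat) (G : 'I_n.+1 -> R -> \bar R) (mu : R) (M : \bar R) :
  (forall i z, G i z != +oo) ->
  (forall (i j : 'I_n.+1) (t x y : R), (0 <= t <= 1)%R ->
     (t * x + (1 - t) * y = mu)%R -> t%:E * G i x + (1 - t)%:E * G j y <= M) ->
  envelope R n G mu <= M.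
Proof.
move=> Gf HM.
have F1 : forall i, G i mu <= M.
  move=> i; have := HM i i 1%R mu mu; rewrite mul1e subrr mul0e adde0; apply.
    by rewrite ler01 lexx.
  by rewrite mul1r mul0r addr0.
have F2 : forall i j z1 z2 g1 g2, (z1 < mu)%R -> (mu < z2)%R ->
    G i z1 = g1%:E -> G j z2 = g2%:E ->
    ((g1 * (z2 - mu) + g2 * (mu - z1)) / (z2 - z1))%:E <= M.
  move=> i j z1 z2 g1 g2 h1 h2 e1 e2.
  have d0 : (0 < z2 - z1)%R by rewrite subr_gt0; exact: lt_trans h2.
  have := HM i j ((z2 - mu) / (z2 - z1))%R z1 z2.
  rewrite e1 e2 -!EFinM -EFinD.
  have -> : ((z2 - mu) / (z2 - z1) * g1 + (1 - (z2 - mu) / (z2 - z1)) * g2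
     = (g1 * (z2 - mu) + g2 * (mu - z1)) / (z2 - z1))%R.
    by field; rewrite gt_eqF.
  apply.
    have t0 : (0 <= (z2 - mu) / (z2 - z1))%R.
      by apply: divr_ge0; lra.
    have t1 : ((z2 - mu) / (z2 - z1) <= 1)%R.
      by rewrite ler_pdivrMr // mul1r; lra.
    by rewrite t0 t1.
  by field; rewrite gt_eqF.
suff [h [hc [hG hmu]]] : exists h : R -> \bar R, concave_e R h /\
    (forall i x, G i x <= h x) /\ h mu <= M.
  apply: le_trans hmu; apply: ereal_inf_lbound; exists h => //; split => // x.
  by apply/bigmax_leP; split; [exact: leNye | move=> i _; exact: hG].
have [Mpy|Mnpy] := eqVneq M +oo.
  exists (fun _ => +oo); split; first by move=> *; exact: leey.
  by split; [move=> *; exact: leey | rewrite Mpy].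
pose L := exists i z, (z < mu)%R /\ G i z != -oo.
pose Rr := exists i z, (mu < z)%R /\ G i z != -oo.
have [[hL hR]|nLR] := pselect (L /\ Rr).
  have [i1 [z1 [hz1 G1]]] := hL.
  have [i2 [z2 [hz2 G2]]] := hR.
  have [g1 e1] : exists g, G i1 z1 = g%:E.
    by case: (ext_cases _ (Gf i1 z1)) => // eq; rewrite eq in G1.
  have [g2 e2] : exists g, G i2 z2 = g%:E.
    by case: (ext_cases _ (Gf i2 z2)) => // eq; rewrite eq in G2.
  have [Mr eM] : exists Mr, M = Mr%:E.
    case: (ext_cases _ Mnpy) => // eq.
    by have := F2 _ _ _ _ _ _ hz1 hz2 e1 e2; rewrite eq leeNy_eq.
  pose A := [set r : R | exists i z g, (mu < z)%R /\ G i z = g%:E /\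
                r = ((g - Mr) / (z - mu))%R].
  pose B := [set r : R | exists i z g, (z < mu)%R /\ G i z = g%:E /\
                r = ((Mr - g) / (mu - z))%R].
  have AB : forall a b, A a -> B b -> (a <= b)%R.
    move=> _ _ [j2 [y2 [h2 [hy2 [f2 ->]]]]] [j1 [y1 [h1 [hy1 [f1 ->]]]]].
    have := F2 _ _ _ _ _ _ hy1 hy2 f1 f2; rewrite eM lee_fin.
    have d1 : (0 < mu - y1)%R by rewrite subr_gt0.
    have d2 : (0 < y2 - mu)%R by rewrite subr_gt0.
    have d0 : (0 < y2 - y1)%R by rewrite subr_gt0; exact: lt_trans hy2.
    rewrite ler_pdivrMr // => H.
    rewrite ler_pdivrMr // mulrAC ler_pdivlMr //; nra.
  have An : A !=set0 by exists ((g2 - Mr) / (z2 - mu))%R, i2, z2, g2.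
  have Bb : B ((Mr - g1) / (mu - z1))%R by exists i1, z1, g1.
  have Aub : ubound A ((Mr - g1) / (mu - z1))%R by move=> a Aa; exact: AB.
  have hsA : has_sup A by split => //; exists ((Mr - g1) / (mu - z1))%R.
  pose m := sup A.
  exists (fun z => (Mr + m * (z - mu))%:E); split; last split.
  - move=> x y a b t /andP[t0 t1]; rewrite !lee_fin => ha hb; nra.
  - move=> i z; case: (ext_cases _ (Gf i z)) => [->|[g eg]]; first exact: leNye.
    rewrite eg lee_fin; case: (ltgtP z mu) => hz.
    + have : (m <= (Mr - g) / (mu - z))%R.
        by apply: ge_sup => // a Aa; apply: AB => //; exists i, z, g.
      have d : (0 < mu - z)%R by rewrite subr_gt0.
      rewrite ler_pdivlMr // => H; nra.
    + have : ((g - Mr) / (z - mu) <= m)%R.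
        by apply: sup_upper_bound => //; exists i, z, g.
      have d : (0 < z - mu)%R by rewrite subr_gt0.
      rewrite ler_pdivrMr // => H; nra.
    + by have := F1 i; rewrite -hz eg eM lee_fin subrr mulr0 addr0.
  - by rewrite subrr mulr0 addr0 eM.
pose h := fun z : R => if (z < mu)%R then (if `[< L >] then +oo else -oo)
             else if z == mu then M else (if `[< Rr >] then +oo else -oo).
exists h; split; last split.
- move=> x y a b t /andP[t0 t1] ha hb.
  have := hcase L Rr mu M x a ha; have := hcase L Rr mu M y b hb.
  rewrite -/h => cy cx.
  rewrite /h; case: (ltgtP (t * x + (1 - t) * y)%R mu) => hp.
  + case: asboolP => hL; first exact: leey.
    exfalso; have hx : (mu <= x)%R.
      by case: cx => [[_ //]|[[-> _]|[/ltW //]]].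
    have hy : (mu <= y)%R.
      by case: cy => [[_ //]|[[-> _]|[/ltW //]]].
    nra.
  + case: asboolP => hR; first exact: leey.
    exfalso; have hx : (x <= mu)%R.
      by case: cx => [[/ltW //]|[[-> _]|[_ //]]].
    have hy : (y <= mu)%R.
      by case: cy => [[/ltW //]|[[-> _]|[_ //]]].
    nra.
  + have ta : t = 0%R \/ a%:E <= M.
      case: cx => [[hx hL]|[[_ ->]|[hx hR]]]; [|by right|].
      * have hy : (y <= mu)%R.
          case: cy => [[/ltW //]|[[-> _]|[_ hR]]] //.
          by exfalso; apply: nLR.
        left; apply/eqP; rewrite eq_le t0 andbT; nra.
      * have hy : (mu <= y)%R.
          case: cy => [[_ hL]|[[-> _]|[/ltW //]]] //.
          by exfalso; apply: nLR.
        left; apply/eqP; rewrite eq_le t0 andbT; nra.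
    have tb : t = 1%R \/ b%:E <= M.
      case: cy => [[hy hL]|[[_ ->]|[hy hR]]]; [|by right|].
      * have hx : (x <= mu)%R.
          case: cx => [[/ltW //]|[[-> _]|[_ hR]]] //.
          by exfalso; apply: nLR.
        left; apply/eqP; rewrite eq_le t1 /=; nra.
      * have hx : (mu <= x)%R.
          case: cx => [[_ hL]|[[-> _]|[/ltW //]]] //.
          by exfalso; apply: nLR.
        left; apply/eqP; rewrite eq_le t1 /=; nra.
    idtac.
    case: tb => [te|hbM].
      case: ta => [te0|haM]; first by move: te; rewrite te0 => /eqP; rewrite eq_sym oner_eq0.
      by rewrite te subrr mul0r addr0 mul1r.
    case: ta => [te0|haM].
      by rewrite te0 mul0r add0r subr0 mul1r.
    case: (ext_cases _ Mnpy) => [Mny|[Mr eM]].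
      by move: haM; rewrite Mny leeNy_eq.
    move: haM hbM; rewrite eM !lee_fin => haM hbM; nra.
- move=> i z; rewrite /h; case: (ltgtP z mu) => hz.
  + case: asboolP => nL; first exact: leey.
    rewrite leeNy_eq; apply/negPn/negP => hG.
    by apply: nL; exists i, z.
  + case: asboolP => nR; first exact: leey.
    rewrite leeNy_eq; apply/negPn/negP => hG.
    by apply: nR; exists i, z.
  + by rewrite hz; exact: F1.
- by rewrite /h ltxx eqxx.
Qed.
End Env.

Section Game.
Variable R : realType.

Lemma sub_rcons0 (g : game R) p i :
  sub g (rcons p i) = obind (fun s => sub s [:: i]) (sub g p).
Proof.
elim: p g => [|k p IH] g; first by case: g.
case: g => // l' n' ch' /=; case: ifP => // _; exact: IH.
Qed.

Lemma sub_rcons (g : game R) p l n ch i : sub g p = Some (Node l n ch) ->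
  (i < n.+1)%N -> sub g (rcons p i) = Some (ch (inord i)).
Proof. by move=> h hi; rewrite sub_rcons0 h /= hi; case: (ch (inord i)). Qed.

Lemma sub_child (g : game R) p l n ch (i : 'I_n.+1) : sub g p = Some (Node l n ch) ->
  sub g (rcons p i) = Some (ch i).
Proof. by move=> h; rewrite (sub_rcons g p l n ch i h (ltn_ord i)) inord_val. Qed.

Lemma pl_noinf (f : R -> \bar R) a b : pl_interp R f a b -> forall mu, (f mu != +oo)%E.
Proof.
move=> [m [x [y [x0 xm inc fa [seg out]]]]] mu.
have [hin|hout] := pselect (a <= mu <= b); last by rewrite out.
move: hin => /andP[h1 h2].
case: m xm inc seg => [|m] xm inc seg.
  have -> : mu = a by apply/eqP; rewrite eq_le h1 andbT -x0 xm.
  by rewrite fa.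
suff [i [hi hx]] : exists i, (i < m.+1)%N /\ (x i <= mu <= x i.+1).
  by rewrite (seg i mu hi hx).
have : forall k, (0 < k <= m.+1)%N -> (mu <= x k) ->
    exists i, (i < k)%N /\ (x i <= mu <= x i.+1).
  elim=> [|k IH] // /andP[_ hk] hmu.
  case: k IH hk hmu => [|k] IH hk hmu.
    by exists 0%N; rewrite x0 h1 hmu.
  have [hle|hlt] := leP mu (x k.+1).
    have [i [hi hx]] := IH (ltnW hk) hle.
    by exists i; split => //; apply: ltnW.
  by exists k.+1; rewrite (ltW hlt) hmu.
by move/(_ m.+1 (leqnn _)); rewrite xm; apply.
Qed.


Lemma leaf_noinf (r1 r2 mu : R) : (leaf_epf R r1 r2 mu != +oo)%E.
Proof. by rewrite /leaf_epf; case: ifP. Qed.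

Lemma Linf_pt (f h : R -> \bar R) (e v mu : R) :
  (Linf R f h <= e%:E)%E -> f mu = v%:E -> (`| v%:E - h mu | <= e%:E)%E.
Proof.
move=> hL fv; apply: le_trans hL; apply: ereal_sup_ubound; exists mu => //.
by rewrite fv.
Qed.

Lemma decomp (t : R) (A B : \bar R) (m : R) : 0 <= t <= 1 ->
  (A != +oo)%E -> (B != +oo)%E -> (t%:E * A + (1 - t)%:E * B = m%:E)%E ->
  exists a b, (t = 0 \/ A = a%:E) /\ (t = 1 \/ B = b%:E) /\ m = t * a + (1 - t) * b.
Proof.
move=> /andP[t0 t1] hA hB.
have [te|tn0] := eqVneq t 0.
  rewrite te mul0e add0e subr0 mul1e => eB.
  exists 0, m; split; first by left.
  by split; [right | rewrite mul0r add0r mul1r].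
have [te|tn1] := eqVneq t 1.
  rewrite te mul1e subrr mul0e adde0 => eA.
  exists m, 0; split; first by right.
  by split; [left | rewrite mul1r mul0r addr0].
have tp : 0 < t by rewrite lt0r tn0.
have tp' : 0 < 1 - t by rewrite subr_gt0 lt_neqAle tn1.
case: (ext_cases _ _ hA) => [->|[a ->]]; first by rewrite (pmulNy _ _ tp) addNye.
case: (ext_cases _ _ hB) => [->|[b ->]]; first by rewrite (pmulNy _ _ tp') addeNy.
rewrite -!EFinM -EFinD => -[<-].
by exists a, b; split; [right|split; [right|]].
Qed.

Lemma combo (t i1 i2 a b v K e : R) : 0 <= t <= 1 ->
  (t = 0 \/ `|i1 - a| <= K) -> (t = 1 \/ `|i2 - b| <= K) ->
  `|(t * a + (1 - t) * b) - v| <= e -> 0 <= K ->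
  `|t * i1 + (1 - t) * i2 - v| <= K + e.
Proof.
move=> /andP[t0 t1] h1 h2; rewrite !ler_norml => /andP[e1 e2] K0.
case: h1 => [te|]; case: h2 => [te'|].
- by move: te; rewrite te' => /eqP; rewrite oner_eq0.
- rewrite te ler_norml => /andP[b1 b2]; apply/andP; split; nra.
- rewrite te' ler_norml => /andP[b1 b2]; apply/andP; split; nra.
- rewrite !ler_norml => /andP[b1 b2] /andP[a1 a2]; apply/andP; split; nra.
Qed.

Lemma epf_noinf (g : game R) pi1 pia U :
  (forall p l n ch, sub g p = Some (Node l n ch) ->
       pl_interp R (U p) (vgrim R pi1 (Node l n ch) p)
                         (valt R pia (Node l n ch) p)) ->
  forall q s z, sub g q = Some s -> (epf R U s q z != +oo)%E.
Proof.
move=> Hpl q [r1 r2|l n ch] z hq; first exact: leaf_noinf.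
exact: pl_noinf (Hpl _ _ _ _ hq) z.
Qed.

Lemma main_ind (g : game R) pi1 pia U c eps :
  (forall p l n ch, sub g p = Some (Node l n ch) ->
       pl_interp R (U p) (vgrim R pi1 (Node l n ch) p)
                         (valt R pia (Node l n ch) p)) ->
  (forall p s, sub g p = Some s ->
       (Linf R (epf R U s p) (target R U pi1 s p) <= eps%:E)%E) ->
  maximizer_choice R U pi1 g c ->
  forall s p, sub g p = Some s -> forall mu v, epf R U s p mu = v%:E ->
  `|induced_value R c s p mu - v| <= (depth s)%:R * eps.
Proof.
move=> Hpl HL Hc; elim=> [r1 r2|l n ch IH] p hp mu v hv.
  move: hv; rewrite /= /leaf_epf; case: ifP => // _ [<-].
  by rewrite subrr normr0 mul0r.
have Gf : forall i z, (child_fun R U pi1 l n ch p i z != +oo)%E.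
  move=> i z; rewrite /child_fun /restrict; case: ifP => // _.
  exact: epf_noinf Hpl _ _ _ (sub_child _ _ _ _ _ i hp).
have hL := Linf_pt _ _ _ _ _ (HL _ _ hp) hv.
have eps0 : 0 <= eps by rewrite -lee_fin; apply: le_trans hL; exact: abse_ge0.
have [hfeas hmax] := Hc p l n ch mu hp.
move: hfeas hmax; case E: (c p mu) => [[[[i j] t] mu1] mu2] /= [hi hj ht hmu] hmax.
set G := child_fun R U pi1 l n ch p.
have envM : envelope R n G mu = objective R U pi1 l n ch p (inord i) (inord j) t mu1 mu2.
  apply/le_anti/andP; split.
    apply: env_le => // i' j' t' x y ht' hxy; exact: hmax.
  rewrite /objective; exact: obj_le_env.
rewrite E.
move: hL; rewrite /target -/G envM /objective -/G.
case eM: (t%:E * G (inord i) mu1 + (1 - t)%:E * G (inord j) mu2)%E => [m| |].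
- have [a [b [ha [hb hm]]]] := decomp _ _ _ _ ht (Gf _ _) (Gf _ _) eM.
  rewrite -EFinB abse_EFin lee_fin => hvm.
  set D := (\max_(k < n.+1) depth (ch k))%N.
  have -> : (D.+1)%:R * eps = D%:R * eps + eps by rewrite -addn1 natrD mulrDl mul1r.
  have Kb : forall (k : nat) mu' a', (k < n.+1)%N ->
      G (inord k) mu' = a'%:E ->
      `|induced_value R c (ch (inord k)) (rcons p k) mu' - a'| <= D%:R * eps.
    move=> k mu' a' hk; rewrite /G /child_fun /restrict; case: ifP => // _ ea.
    have := IH (inord k) _ (sub_child _ _ _ _ _ (inord k) hp) _ _ ea.
    rewrite inordK // => h; apply: le_trans h _.
    apply: ler_wpM2r => //; rewrite ler_nat /D; apply: (@leq_bigmax _ (fun k0 => depth (ch k0))).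
  apply: (combo t _ _ a b) ht _ _ _ _.
  + by case: ha => [->|ea]; [left | right; exact: Kb].
  + by case: hb => [->|eb]; [left | right; exact: Kb].
  + by rewrite -hm distrC.
  + exact: mulr_ge0.
- by [].
- by [].
Qed.
End Game.

Theorem theorem4 :
  exists C : nat, forall (R : realType) (g : game R)
    (pi1 pia : seq nat -> nat -> R) (U : seq nat -> R -> \bar R)
    (c : seq nat -> R -> nat * nat * R * R * R) (mu_root eps : R),
    is_strategy R true pi1 g ->
    is_strategy R false pia g ->
    (forall p s, sub g p = Some s -> vgrim R pi1 s p <= valt R pia s p) ->
    (forall p l n ch, sub g p = Some (Node l n ch) ->
       pl_interp R (U p) (vgrim R pi1 (Node l n ch) p)
                         (valt R pia (Node l n ch) p)) ->
    (forall p s, sub g p = Some s ->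
       (Linf R (epf R U s p) (target R U pi1 s p) <= eps%:E)%E) ->
    maximizer_choice R U pi1 g c ->
    (forall mu, (epf R U g [::] mu <= epf R U g [::] mu_root)%E) ->
    (`| (induced_value R c g [::] mu_root)%:E
        - ereal_sup (range (epf R U g [::])) |
       <= (C%:R * (depth g)%:R * eps)%:E)%E.
Proof.
exists 1%N => R g pi1 pia U c mu_root eps _ _ _ Hpl HL Hc Hmax.
have hg : sub g [::] = Some g by case: g {Hpl HL Hc Hmax}.
have -> : ereal_sup (range (epf R U g [::])) = epf R U g [::] mu_root.
  apply/le_anti/andP; split.
    by apply: ge_ereal_sup => _ [mu _ <-]; exact: Hmax.
  by apply: ereal_sup_ubound; exists mu_root.
have [v ev] : exists v, epf R U g [::] mu_root = v%:E.
  case: (ext_cases _ _ (epf_noinf _ _ _ _ _ Hpl _ _ mu_root hg)) => [eNy|//].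
  exfalso; move: g hg Hpl HL Hc Hmax eNy => [r1 r2|l n ch] hg Hpl HL Hc Hmax eNy.
    by have := Hmax r2; rewrite eNy leeNy_eq /= /leaf_epf eqxx.
  have [m [x [y [x0 xm inc fa _]]]] := Hpl _ _ _ _ hg.
  by have := Hmax (vgrim R pi1 (Node l n ch) [::]); rewrite eNy leeNy_eq /= fa.
rewrite ev -EFinB abse_EFin lee_fin mul1r.
exact: (main_ind _ _ _ _ _ _ _ Hpl HL Hc g [::] hg mu_root v ev).
Qed.
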